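(* Let $U$ be a subgroup of $G^*$. Then: (i) the matching mechanism $C^U$ is $U$-symmetric; (ii) if $F$ is a resolute and $U$-symmetric matching mechanism, then $F(p)\subseteq C^U(p)$ for every $p\in\mathcal{P}$.
   Context: Fix $n\ge 2$, $W=\{1,\dots,n\}$, $M=\{n+1,\dots,2n\}$, $I=W\cup M$. Permutations compose right-to-left. A preference profile is a function $p$ on $I$ assigning to each $x\in W$ a linear order $p(x)$ on $M$ and to each $y\in M$ a linear order $p(y)$ on $W$; $\mathcal{P}$ is the set of preference profiles. A matching is a permutation $\mu$ of $I$ with $\mu(W)=M$, $\mu(M)=W$, $\mu(\mu(z))=z$ for all $z$; $\mathcal{M}$ is the set of matchings. $G^*=\{\varphi\in\mathrm{Sym}(I):\{\varphi(W),\varphi(M)\}=\{W,M\}\}$. For a linear order $R$ on $X\subseteq I$ and $\varphi\in\mathrm{Sym}(I)$, $\varphi R$ is the relation on $\varphi(X)$ with $(a,b)\in\varphi R$ iff $(\varphi^{-1}(a),\varphi^{-1}(b))\in R$. For $p\in\mathcal{P}$, $\varphi\in G^*$, $p^\varphi(z)=\varphi\,p(\varphi^{-1}(z))$. For a permutation $\mu$, $\mu^\varphi=\varphi\mu\varphi^{-1}$; $S^\varphi=\{\mu^\varphi:\mu\in S\}$. A matching mechanism is a correspondence $F$ from $\mathcal{P}$ to $\mathcal{M}$; resolute if $|F(p)|=1$ for all $p$; $U$-symmetric if $F(p^\varphi)=F(p)^\varphi$ for all $p$ and $\varphi\in U$. For $U\le G^*$ and $p\in\mathcal{P}$, $\mathrm{Stab}_U(p)=\{\varphi\in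 U:p^\varphi=p\}$, and $C^U$ is the matching mechanism $C^U(p)=\{\mu\in\mathcal{M}:\mu^\varphi=\mu\text{ for all }\varphi\in\mathrm{Stab}_U(p)\}$. *)

(* Defs.v *)
From mathcomp Require Import all_boot all_fingroup.
Set Implicit Arguments. Unset Strict Implicit. Unset Printing Implicit Defensive.

(* Agents I = {1,..,2n} are represented 0-based by 'I_(n+n):
   W = {0,..,n-1} (paper's {1..n}),  M = {n,..,2n-1} (paper's {n+1..2n}). *)
Notation agent n := 'I_(n + n).

Section Defs.
Variable n : nat.
Local Notation T := (agent n).

Definition Wset : {set T} := [set i : T | i < n].
Definition Mset : {set T} := [set i : T | n <= i].

Definition is_linorder (X : {set T}) (R : {set T * T}) : bool :=
  [&& R \subset setX X X,
      [forall x in X, (x, x) \in R],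
      [forall x in X, forall y in X, ((x, y) \in R) && ((y, x) \in R) ==> (x == y)],
      [forall x in X, forall y in X, forall z in X,
          ((x, y) \in R) && ((y, z) \in R) ==> ((x, z) \in R)]
    & [forall x in X, forall y in X, ((x, y) \in R) || ((y, x) \in R)]].

Definition profile := {ffun T -> {set T * T}}.

Definition is_profile (p : profile) : bool :=
  [forall x in Wset, is_linorder Mset (p x)] &&
  [forall y in Mset, is_linorder Wset (p y)].

Definition is_matching (mu : {perm T}) : bool :=
  [&& mu @: Wset == Mset, mu @: Mset == Wset & [forall z, mu (mu z) == z]].

Definition matchings : {set {perm T}} := [set mu | is_matching mu].

Definition Gstar : {set {perm T}} :=
  [set phi : {perm T} | [set phi @: Wset; phi @: Mset] == [set Wset; Mset]].

Definition rel_act (phi : {perm T}) (R : {set T * T}) : {set T * T} :=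
  [set ab : T * T | ((phi^-1)%g ab.1, (phi^-1)%g ab.2) \in R].

Definition prof_act (phi : {perm T}) (p : profile) : profile :=
  [ffun z => rel_act phi (p ((phi^-1)%g z))].

(* μ^φ = φ μ φ^{-1} (right-to-left composition), i.e. the function
   z ↦ φ (μ (φ^{-1} z)).  In MathComp, (s * t) z = t (s z), so this is
   the permutation φ^{-1} * μ * φ. *)
Definition mconj (phi mu : {perm T}) : {perm T} := ((phi^-1) * mu * phi)%g.

Definition conjset (phi : {perm T}) (S : {set {perm T}}) : {set {perm T}} :=
  [set mconj phi mu | mu in S].

Definition Stab (U : {set {perm T}}) (p : profile) : {set {perm T}} :=
  [set phi in U | prof_act phi p == p].

Definition CU (U : {set {perm T}}) (p : profile) : {set {perm T}} :=
  [set mu | is_matching mu & [forall phi in Stab U p, mconj phi mu == mu]].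

(* A matching mechanism: a correspondence 𝒫 → ℳ (values on non-profiles are
   irrelevant). *)
Definition is_mechanism (F : profile -> {set {perm T}}) : Prop :=
  forall p, is_profile p -> F p \subset matchings.

Definition resolute (F : profile -> {set {perm T}}) : Prop :=
  forall p, is_profile p -> #|F p| = 1.

Definition Usymmetric (U : {set {perm T}}) (F : profile -> {set {perm T}}) : Prop :=
  forall p phi, is_profile p -> phi \in U -> F (prof_act phi p) = conjset phi (F p).

End Defs.

Lemma mconjE n (phi mu : {perm agent n}) z :
  mconj phi mu z = phi (mu ((phi^-1)%g z)).
Proof. by rewrite /mconj !permM. Qed.

(* Main.v *)
Require Import Defs.
From mathcomp Require Import all_boot all_fingroup.

Set Implicit Arguments. Unset Strict Implicit. Unset Printing Implicit Defensive.

Section Aux.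
Variable n : nat.
Local Notation T := (agent n).

Lemma mconjJ (phi mu : {perm T}) : mconj phi mu = (mu ^ phi)%g.
Proof. by rewrite /mconj /conjg mulgA. Qed.

Lemma prof_actM (phi psi : {perm T}) (p : profile n) :
  prof_act phi (prof_act psi p) = prof_act (psi * phi)%g p.
Proof.
apply/ffunP => z; rewrite !ffunE; apply/setP => [[a b]].
by rewrite !inE /= ?ffunE ?inE /= invMg !permM.
Qed.

Lemma prof_act1 (p : profile n) : prof_act 1%g p = p.
Proof.
apply/ffunP => z; rewrite !ffunE; apply/setP => [[a b]].
by rewrite !inE /= invg1 !perm1.
Qed.

Lemma prof_actK (phi : {perm T}) (p : profile n) :
  prof_act (phi^-1)%g (prof_act phi p) = p.
Proof. by rewrite prof_actM mulgV prof_act1. Qed.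

Lemma imset_permC (phi : {perm T}) (A : {set T}) :
  phi @: (~: A) = ~: (phi @: A).
Proof.
apply/setP => x; rewrite -{1 2}(permKV phi x) !inE !mem_imset ?inE //;
  exact: perm_inj.
Qed.

Lemma MsetC : Mset n = ~: Wset n.
Proof. by apply/setP => x; rewrite !inE leqNgt. Qed.

Lemma imset_permV (phi : {perm T}) (A B : {set T}) :
  phi @: A = B -> (phi^-1)%g @: B = A.
Proof.
move=> <-; rewrite -imset_comp -[RHS]imset_id; apply: eq_imset => x /=.
by rewrite permK.
Qed.

Lemma Gstar_cases (phi : {perm T}) : phi \in Gstar n ->
  (phi @: Wset n = Wset n /\ phi @: Mset n = Mset n) \/
  (phi @: Wset n = Mset n /\ phi @: Mset n = Wset n).
Proof.
rewrite inE => /eqP H.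
have : phi @: Wset n \in [set Wset n; Mset n] by rewrite -H !inE eqxx.
rewrite !inE => /orP [] /eqP E.
  by left; split => //; rewrite MsetC imset_permC E.
by right; split => //; rewrite MsetC imset_permC E MsetC setCK.
Qed.

Lemma imset_conj (phi mu : {perm T}) (A : {set T}) :
  (mu ^ phi)%g @: A = phi @: (mu @: ((phi^-1)%g @: A)).
Proof.
rewrite -!imset_comp; apply: eq_imset => x /=.
by rewrite /conjg !permM.
Qed.

Lemma matching_conj (phi mu : {perm T}) : phi \in Gstar n ->
  is_matching mu -> is_matching (mu ^ phi)%g.
Proof.
move=> /Gstar_cases H /and3P [/eqP h1 /eqP h2 /forallP h3].
apply/and3P; split; last first.
  apply/forallP => z; rewrite /conjg !permM permK.
  by rewrite (eqP (h3 _)) permKV.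
all: rewrite imset_conj; case: H => [[e1 e2]|[e1 e2]].
all: try rewrite (imset_permV e1); try rewrite (imset_permV e2).
all: by rewrite ?h1 ?h2 ?e1 ?e2.
Qed.

End Aux.

Theorem proposition3 (n : nat) (hn : 2 <= n)
    (U : {group {perm agent n}}) (hU : U \subset Gstar n) :
  Usymmetric U (CU U) /\
  (forall F : profile n -> {set {perm agent n}},
      is_mechanism F -> resolute F -> Usymmetric U F ->
      forall p : profile n, is_profile p -> F p \subset CU U p).
Proof.
split.
  move=> p phi _ phiU; apply/setP => mu.
  have phiG : phi \in Gstar n by apply: (subsetP hU).
  have phiVG : (phi^-1)%g \in Gstar n by apply: (subsetP hU); rewrite groupV.
  rewrite -{2}(conjgKV phi mu) /conjset.
  rewrite (eq_imset _ (@mconjJ n phi)).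
  rewrite (mem_imset (f := fun m => (m ^ phi)%g)); last exact: conjg_inj.
  rewrite !inE; congr (_ && _).
    apply/idP/idP => H.
      exact: matching_conj.
    by rewrite -(conjgKV phi mu); apply: matching_conj.
  apply/forallP/forallP => H chi.
    apply/implyP; rewrite !inE => /andP [chiU /eqP chiS].
    have := H (chi ^ phi)%g; rewrite !inE groupJ //=.
    rewrite !mconjJ.
    have -> : prof_act (chi ^ phi)%g (prof_act phi p) == prof_act phi p.
      by rewrite prof_actM /conjg !mulgA mulgV mul1g -prof_actM chiS.
    move=> /eqP E; apply/eqP.
    have e : (phi^-1 * chi = (chi ^ phi) * phi^-1)%g.
      by rewrite /conjg !mulgA mulgK.
    by rewrite -conjgM e conjgM E.
  apply/implyP; rewrite !inE => /andP [chiU /eqP chiS].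
  have := H (chi ^ phi^-1)%g; rewrite !inE groupJ ?groupV //=.
  rewrite !mconjJ.
  have -> : prof_act (chi ^ phi^-1)%g p == p.
    apply/eqP; rewrite /conjg invgK -prof_actM -prof_actM chiS.
    exact: prof_actK.
  move=> /eqP E; apply/eqP.
  have e : (phi^-1 * chi ^ phi^-1 = chi * phi^-1)%g.
    by rewrite /conjg invgK !mulgA mulVg mul1g.
  by move: E; rewrite -conjgM e conjgM => /conjg_inj.
move=> F Fm Fr Fs p pp; apply/subsetP => mu muF.
have [nu Fnu] := cards1P (introT eqP (Fr p pp)).
move: muF; rewrite Fnu inE => /eqP ->.
have : nu \in matchings n by apply: (subsetP (Fm p pp)); rewrite Fnu inE.
rewrite !inE => ->; apply/forallP => phi; apply/implyP.
rewrite inE => /andP [phiU /eqP phiS].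
have := Fs p phi pp phiU; rewrite phiS Fnu /conjset imset_set1.
by move=> /setP /(_ nu); rewrite !inE eqxx eq_sym.
Qed.
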